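(* Let $\Bbbk$ be a field, $q\in\Bbbk$ a primitive $n$-th root of unity and $k,\ell,t\in\mathbb{N}_0$ with $k,\ell,t<n$. Then: (i) if $n\le t+\ell$, then for each $0\le m<t$, $$\sum_{s=0}^{m}(-1)^sq^{\frac{s(s+1)}{2}-sm}\binom{t}{m-s}_q\binom{s}{t+\ell-n}_q=(-1)^mq^{-\frac{m(m-1)}{2}-t(t+\ell-m)}\binom{m-t+n}{\ell}_q;$$ (ii) if $\ell\le k$, then $\sum_{s=0}^{\ell}(-1)^sq^{\frac{s(s+1)}{2}-s(\ell-k)}\binom{n+\ell-k}{s}_q=\binom{k}{\ell}_q$; (iii) if $\ell\le k$, then for each $\ell\le m<n$, $$\sum_{s=0}^{m}(-1)^sq^{\frac{s(s+1)}{2}-s(\ell-k)}\binom{n+m-k}{s}_q\binom{n+m-s}{n+\ell-s}_q=\binom{k}{\ell}_q.$$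
   Context: $q$-binomials: for integers $N\ge0$ and $m$, $\binom{0}{0}_q=1$, $\binom{N}{m}_q=0$ if $m>N$ or $m<0$, and for $N\ge1$, $0\le m\le N$, $\binom{N}{m}_q=\binom{N-1}{m-1}_q+q^m\binom{N-1}{m}_q$. *)

(* Defs.v *)
From mathcomp Require Import all_boot all_order all_algebra.
Set Implicit Arguments. Unset Strict Implicit. Unset Printing Implicit Defensive.
Import Order.TTheory GRing.Theory Num.Theory.
Local Open Scope ring_scope.

(* For m > N the recursion also yields 0. *)
Fixpoint qbinom (R : ringType) (q : R) (N m : nat) {struct N} : R :=
  match N, m with
  | 0%N, 0%N => 1
  | 0%N, _.+1 => 0
  | N'.+1, 0%N => qbinom q N' 0
  | N'.+1, m'.+1 => qbinom q N' m' + q ^+ m * qbinom q N' m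
  end.

(* Main.v *)
Require Import Defs.
From mathcomp Require Import all_boot all_order all_algebra zify ring.
Import Order.TTheory GRing.Theory Num.Theory.
Local Open Scope ring_scope.

Lemma qb_gt {F : fieldType} (q : F) N m : (N < m)%N -> qbinom q N m = 0.
Proof.
elim: N m => [|N IH] [|m] //= H.
by rewrite !IH ?mulr0 ?addr0 // ltnW.
Qed.

Lemma qb_0 {F : fieldType} (q : F) N : qbinom q N 0 = 1.
Proof. by elim: N. Qed.

Lemma qb_nn {F : fieldType} (q : F) N : qbinom q N N = 1.
Proof. by elim: N => //= N ->; rewrite qb_gt ?mulr0 ?addr0. Qed.

Lemma qbS {F : fieldType} (q : F) N m :
  qbinom q N.+1 m.+1 = qbinom q N m + q ^+ m.+1 * qbinom q N m.+1.
Proof. by []. Qed.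

Lemma qbP2 {F : fieldType} (q : F) N s :
  qbinom q N.+1 s.+1 = qbinom q N s.+1 + q ^+ (N - s) * qbinom q N s.
Proof.
elim: N s => [|N IH] s.
  case: s => [|s] /=; first by rewrite expr0 mulr1 add0r mulr0 addr0.
  by rewrite !mulr0.
case: s => [|s].
  rewrite qbS !qb_0 subn0 mulr1.
  have E1 := IH 0; rewrite qb_0 subn0 mulr1 in E1.
  rewrite {1}E1 [in RHS]qbS qb_0 expr1 [q ^+ N.+1]exprS; ring.
have E1 := IH s; have E2 := IH s.+1.
rewrite qbS [in RHS]qbS.
have R : qbinom q N s + q ^+ s.+1 * qbinom q N s.+1 =
   qbinom q N s.+1 + q ^+ (N - s) * qbinom q N s by rewrite -qbS IH.
rewrite E2.
case: (ltnP s N) => hsN.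
  rewrite subSS qbS.
  move: R; set a := qbinom q N s; set b := qbinom q N s.+1; set c := qbinom q N s.+2.
  set e := q ^+ (N - s) => R.
  have key : q ^+ s.+2 * q ^+ (N - s.+1) = q ^+ s.+1 * e.
    by rewrite -!exprD; congr (_ ^+ _); lia.
  apply/eqP; rewrite -subr_eq0; apply/eqP.
  transitivity (a + q ^+ s.+1 * b - (b + e * a)); last by rewrite R subrr.
  rewrite mulrDr mulrA key [q ^+ s.+2]exprS; ring.
rewrite (@qb_gt _ q N s.+2) 1?(@qb_gt _ q N s.+1) //; try lia.
have -> : (N.+1 - s.+1 = 0)%N by lia.
by rewrite !(mulr0, addr0, add0r, expr0, mul1r).
Qed.

Lemma qb_ratio {F : fieldType} (q : F) N l :
  (1 - q ^+ (N - l)) * qbinom q N l = (1 - q ^+ l.+1) * qbinom q N l.+1.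
Proof.
have := qbP2 q N l; rewrite qbS => E.
apply/eqP; rewrite -subr_eq0; apply/eqP.
transitivity (qbinom q N l + q ^+ l.+1 * qbinom q N l.+1 -
   (qbinom q N l.+1 + q ^+ (N - l) * qbinom q N l)); last by rewrite E subrr.
ring.
Qed.

Lemma qb_absorb {F : fieldType} (q : F) N b :
  (1 - q ^+ b.+1) * qbinom q N.+1 b.+1 = (1 - q ^+ N.+1) * qbinom q N b.
Proof.
case: (leqP b N) => hb; last by rewrite !qb_gt ?mulr0 //; lia.
have E2 := qbP2 q N b.
rewrite mulrBl mul1r {1}qbS E2.
have -> : q ^+ N.+1 = q ^+ b.+1 * q ^+ (N - b) by rewrite -exprD; congr (_ ^+ _); lia.
ring.
Qed.

Lemma qb_sym {F : fieldType} (q : F) N K : (K <= N)%N -> qbinom q N K = qbinom q N (N - K).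
Proof.
elim: N K => [|N IH] [|K] // hK.
- by rewrite subn0 qb_nn qb_0.
- rewrite subSS.
  case: (ltnP K N) => hKN.
    have -> : (N - K = (N - K.+1).+1)%N by lia.
    rewrite qbP2 qbS.
    have -> : (N - K.+1).+1 = (N - K)%N by lia.
    by rewrite -IH // -IH 1?ltnW.
  have -> : K = N by lia.
  by rewrite subnn qb_0 qb_nn.
Qed.

Lemma q_neq1 {F : fieldType} {q : F} {n i} : n.-primitive_root q ->
  (0 < i < n)%N -> 1 - q ^+ i != 0.
Proof.
move=> hq /andP[h0 hn]; rewrite subr_eq0 eq_sym -(prim_order_dvd hq).
by apply/negP => /dvdn_leq => /(_ h0); lia.
Qed.

Lemma qb_n_zero {F : fieldType} (q : F) n b : n.-primitive_root q ->
  (0 < b < n)%N -> qbinom q n b = 0.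
Proof.
move=> hq hb; have hn : (0 < n)%N by lia.
have := q_neq1 hq hb.
case: n hq hb hn => [|n] // hq hb _; case: b hb => [|b] // hb.
have := qb_absorb q n b; rewrite (prim_expr_order hq) subrr mul0r => /eqP.
by rewrite mulf_eq0 => /orP[->|/eqP].
Qed.

Lemma qb_lucas {F : fieldType} (q : F) n a b : n.-primitive_root q ->
  (a < n)%N -> (b < n)%N -> qbinom q (n + a) b = qbinom q a b.
Proof.
move=> hq; elim: a b => [|a IH] b ha hb.
  rewrite addn0; case: b hb => [|b] hb; first by rewrite !qb_0.
  by rewrite qb_n_zero // qb_gt.
case: b hb => [|b] hb; first by rewrite !qb_0.
by rewrite addnS qbS !IH ?(ltnW ha) ?(ltnW hb).
Qed.

Lemma qb_refl {F : fieldType} (q : F) n j l : n.-primitive_root q ->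
  (j + l < n)%N ->
  q ^+ (l * j + 'C(l.+1, 2)) * qbinom q (n.-1 - j) l = (-1) ^+ l * qbinom q (j + l) l.
Proof.
move=> hq; elim: l => [|l IH] hjl.
  by rewrite !qb_0 mul0n bin_small // expr0 !mul1r.
have IH' := IH ltac:(lia).
have hnz : 1 - q ^+ l.+1 != 0 by apply: (q_neq1 hq); apply/andP; split; lia.
apply: (mulfI hnz).
rewrite addnS [RHS]mulrCA qb_absorb [LHS]mulrCA -qb_ratio.
have -> : (n.-1 - j - l = n - (j + l).+1)%N by lia.
set f := qbinom q (n.-1 - j) l.
have -> : q ^+ (l.+1 * j + 'C(l.+2, 2)) = q ^+ (j + l).+1 * q ^+ (l * j + 'C(l.+1, 2)).
  rewrite -exprD binS bin1; congr (_ ^+ _); lia.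
have hn : q ^+ (n - (j + l).+1) * q ^+ (j + l).+1 = 1.
  by rewrite -exprD subnK ?(prim_expr_order hq) //; lia.
move: hn IH'; set Q := q ^+ (j + l).+1; set P := q ^+ (n - (j + l).+1).
set A := q ^+ (l * j + 'C(l.+1, 2)); set X := qbinom q (j + l) l => hn IH'.
have -> : (-1) ^+ l.+1 * ((1 - Q) * X) = - ((1 - Q) * (A * f)) by rewrite IH' exprS; ring.
apply/eqP; rewrite -subr_eq0; apply/eqP.
transitivity (A * f * (1 - P * Q)); first by ring.
by rewrite hn subrr mulr0.
Qed.

Lemma qb_inv {F : fieldType} (q : F) N K : q != 0 ->
  q ^+ (K * (N - K)) * qbinom q^-1 N K = qbinom q N K.
Proof.
move=> q0; elim: N K => [|N IH] [|K].
- by rewrite !qb_0 mulr1.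
- by rewrite !qb_gt // mulr0.
- by rewrite !qb_0 mul0n mulr1.
rewrite (qbS q^-1) (qbP2 q) mulrDr [LHS]addrC; congr (_ + _).
  case: (ltnP K N) => hK; last by rewrite !qb_gt ?mulr0 //; lia.
  rewrite -IH mulrA; congr (_ * _).
  have -> : (N.+1 - K.+1 = (N - K.+1).+1)%N by lia.
  by rewrite mulnS exprD -mulrA exprVn mulrCA divff ?mulr1 // expf_neq0.
by rewrite -IH mulrA -exprD.
Qed.

Definition Gt {F : fieldType} (q x z : F) c N l s :=
  (-1) ^+ s * q ^+ 'C(s.+1, 2) * x ^+ s * qbinom q N s *
  (z ^+ (l - s) * qbinom q (c + (l - s)).-1 (l - s)).

Definition Gs {F : fieldType} (q x z : F) c N l :=
  \sum_(0 <= s < l.+1) Gt q x z c N l s.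

Lemma G_base {F : fieldType} (q x z : F) N l :
  Gs q x z 0 N l = (-1) ^+ l * q ^+ 'C(l.+1, 2) * x ^+ l * qbinom q N l.
Proof.
rewrite /Gs big_nat_recr //= (eq_big_nat _ _ (F2 := fun=> 0)) ?big1_eq ?add0r.
  by rewrite /Gt subnn qb_0 !mulr1.
move=> i /andP[_ hi]; rewrite /Gt add0n.
by rewrite (@qb_gt _ q (l - i).-1 (l - i)) ?mulr0 //; lia.
Qed.

Lemma G_a {F : fieldType} (q x z : F) c N l :
  Gs q x z c N.+1 l.+1 = Gs q x z c N l.+1 - q ^+ N.+1 * x * Gs q x z c N l.
Proof.
rewrite /Gs big_nat_recl // [in RHS]big_nat_recl // /Gt !qb_0.
rewrite -addrA; congr (_ + _).
rewrite -mulNr big_distrr /= -big_split /=.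
apply: eq_big_nat => i /andP[_ hi].
rewrite -qbS qbP2 subSS.
case: (leqP i N) => hiN; last first.
  rewrite (@qb_gt _ q N i) // (@qb_gt _ q N i.+1); last by lia.
  by rewrite !(mulr0, mul0r, addr0).
rewrite binS bin1 exprD [(-1) ^+ i.+1]exprS [x ^+ i.+1]exprS.
have E : q ^+ i.+1 * q ^+ (N - i) = q ^+ N.+1 by rewrite -exprD; congr (_ ^+ _); lia.
rewrite -E; ring.
Qed.

Lemma G_b {F : fieldType} (q x z : F) c N l :
  Gs q x z c N l.+1 = Gs q x z c.+1 N l.+1 - q ^+ c * z * Gs q x z c.+1 N l.
Proof.
rewrite /Gs big_nat_recr // [in RHS]big_nat_recr //= /Gt subnn !addn0 !qb_0.
rewrite addrAC; congr (_ + _).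
rewrite -mulNr big_distrr /= -big_split /=.
apply: eq_big_nat => i /andP[_ hi].
have -> : (l.+1 - i = (l - i).+1)%N by lia.
rewrite ?addnS ?addSn /= -qbS qbP2.
have -> : (c + (l - i) - (l - i) = c)%N by lia.
rewrite [z ^+ (l - i).+1]exprS; ring.
Qed.

Lemma G_top {F : fieldType} (q x z : F) c N l :
  q ^+ N.+1 * x = q ^+ c * z -> Gs q x z c.+1 N.+1 l = Gs q x z c N l.
Proof.
move=> h; case: l => [|l].
  by rewrite /Gs !big_nat1 /Gt !qb_0.
by rewrite G_a (G_b _ _ _ c) h.
Qed.

Lemma G_iter {F : fieldType} (q x z : F) c d l :
  q ^+ d.+1 * x = z -> Gs q x z c (c + d) l = (-1) ^+ l * q ^+ 'C(l.+1, 2) * x ^+ l * qbinom q d l.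
Proof.
move=> h; elim: c => [|c IH]; first by rewrite add0n G_base.
rewrite addSn G_top // -h mulrA -exprD; congr (_ ^+ _ * _); lia.
Qed.
Lemma half_C s : ((s * s.+1)./2 = 'C(s.+1, 2))%N.
Proof. by rewrite bin2 mulnC. Qed.

Lemma part2 {F : fieldType} (n : nat) (q : F) (k l : nat) :
  n.-primitive_root q -> (k < n)%N -> (l <= k)%N ->
    \sum_(0 <= s < l.+1)
      (-1) ^+ s * q ^ ((s * s.+1)./2%:Z - s%:Z * (l%:Z - k%:Z))
        * qbinom q (n + l - k) s
    = qbinom q k l.
Proof.
move=> hq hk hlk.
have qn := prim_expr_order hq.
set d := (n.-1 - (k - l))%N.
transitivity (Gs q (q ^+ (k - l)) 1 1 (1 + d) l).
  apply: eq_big_nat => s /andP[_ hs]; rewrite /Gt expr1n mul1r.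
  have -> : (1 + (l - s)).-1 = (l - s)%N by lia.
  rewrite qb_nn mulr1 -exprM -[_ * q ^+ _ * q ^+ _]mulrA -exprD half_C.
  have -> : (n + l - k = 1 + d)%N by rewrite /d; lia.
  have -> : ('C(s.+1, 2)%:Z - s%:Z * (l%:Z - k%:Z) = ('C(s.+1, 2) + (k - l) * s)%N%:Z)%R.
    have : (l * s <= k * s)%N by rewrite leq_mul2r hlk orbT.
    rewrite mulnBl; lia.
  by [].
rewrite G_iter; last by rewrite -exprD -qn; congr (_ ^+ _); rewrite /d; lia.
have R := @qb_refl _ q n (k - l) l hq ltac:(lia).
rewrite subnK // in R.
rewrite -[qbinom q k l](signrMK l) -R.
rewrite -exprM -!mulrA; congr (_ * _).
by rewrite mulrA -exprD mulnC addnC.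
Qed.

Lemma fin23 {F : fieldType} (n : nat) (q : F) (k l : nat) :
  n.-primitive_root q -> (k < n)%N -> (l <= k)%N ->
  (-1) ^+ l * q ^+ 'C(l.+1, 2) * q ^+ (k - l) ^+ l * qbinom q (n.-1 - (k - l)) l
  = qbinom q k l.
Proof.
move=> hq hk hlk.
have R := @qb_refl _ q n (k - l) l hq ltac:(lia).
rewrite subnK // in R.
rewrite -[qbinom q k l](signrMK l) -R.
rewrite -exprM -!mulrA; congr (_ * _).
by rewrite mulrA -exprD mulnC addnC.
Qed.

Lemma Zexp_eq (k l s : nat) : (l <= k)%N ->
  ((s * s.+1)./2%:Z - s%:Z * (l%:Z - k%:Z) = ('C(s.+1, 2) + (k - l) * s)%N%:Z)%R.
Proof.
move=> hlk; rewrite half_C.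
have : (l * s <= k * s)%N by rewrite leq_mul2r hlk orbT.
rewrite mulnBl; lia.
Qed.

Lemma part3 {F : fieldType} (n : nat) (q : F) (k l : nat) :
  n.-primitive_root q -> (k < n)%N -> (l <= k)%N ->
    forall m : nat, (l <= m)%N -> (m < n)%N ->
      \sum_(0 <= s < m.+1)
        (-1) ^+ s * q ^ ((s * s.+1)./2%:Z - s%:Z * (l%:Z - k%:Z))
          * qbinom q (n + m - k) s * qbinom q (n + m - s) (n + l - s)
      = qbinom q k l.
Proof.
move=> hq hk hlk m hlm hmn.
have qn := prim_expr_order hq.
set d := (n.-1 - (k - l))%N.
rewrite (big_cat_nat _ (n := l.+1)) //= [X in _ + X]big_nat_cond [X in _ + X]big1 ?addr0.
  transitivity (Gs q (q ^+ (k - l)) 1 (m - l).+1 ((m - l).+1 + d) l).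
    apply: eq_big_nat => s /andP[_ hs]; rewrite /Gt expr1n mul1r.
    rewrite -exprM -[_ * q ^+ _ * q ^+ _]mulrA -exprD Zexp_eq //.
    have -> : (n + m - k = (m - l).+1 + d)%N by rewrite /d; lia.
    rewrite -!mulrA; do 3 congr (_ * _).
    rewrite qb_sym; last by lia.
    have -> : (n + m - s - (n + l - s) = m - l)%N by lia.
    have -> : (n + m - s = n + (m - s))%N by lia.
    rewrite qb_lucas //; try lia.
    rewrite qb_sym; last by lia.
    by congr qbinom; lia.
  rewrite G_iter; last by rewrite -exprD -qn; congr (_ ^+ _); rewrite /d; lia.
  exact: fin23.
move=> s /andP[/andP[hs1 hs2] _].
rewrite (@qb_sym _ q (n + m - s) (n + l - s)); last by lia.
have -> : (n + m - s - (n + l - s) = m - l)%N by lia.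
have -> : (n + m - s = n + (m - s))%N by lia.
rewrite qb_lucas; try lia.
by rewrite (@qb_gt _ q (m - s) (m - l)) ?mulr0 //; lia.
Qed.
Lemma q_neq0 {F : fieldType} (q : F) n : n.-primitive_root q -> (0 < n)%N -> q != 0.
Proof.
move=> hq hn; apply/eqP => q0; have := prim_expr_order hq.
rewrite q0 expr0n; case: n hn {hq} => // n _ /= /eqP; by rewrite eq_sym oner_eq0.
Qed.

Lemma qz_mod {F : fieldType} (q : F) n (a b w : int) : n.-primitive_root q -> (0 < n)%N ->
  a = b + n%:Z * w -> q ^ a = q ^ b.
Proof.
move=> hq hn ->.
have h1 : q ^ (n%:Z * w) = 1.
  have -> : q ^ (n%:Z * w) = (q ^ n%:Z) ^ w by rewrite exprz_exp.
  by rewrite -exprnP (prim_expr_order hq) exp1rz.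
by rewrite expfzDr ?h1 ?mulr1 //; exact: q_neq0 hq hn.
Qed.

Lemma half_int (s : nat) : ((s * s.+1)./2)%:Z * 2 = s%:Z * (s%:Z + 1) :> int.
Proof.
have : ~~ odd (s * s.+1) by rewrite oddM /=; case: (odd s).
move/even_halfK; rewrite -muln2 => h.
by rewrite -PoszM h PoszM -addn1.
Qed.

Lemma half_int' (m : nat) : ((m * m.-1)./2)%:Z * 2 = m%:Z * (m%:Z - 1) :> int.
Proof.
case: m => [|m] //=; rewrite mulnC half_int; lia.
Qed.

Lemma bin2_int (u : nat) : ('C(u.+1, 2))%:Z * 2 = u%:Z * (u%:Z + 1) :> int.
Proof. by rewrite -half_C half_int. Qed.

Lemma part1 {F : fieldType} (n : nat) (q : F) (l t : nat) :
  n.-primitive_root q -> (l < n)%N -> (t < n)%N -> (n <= t + l)%N ->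
    forall m : nat, (m < t)%N ->
      \sum_(0 <= s < m.+1)
        (-1) ^+ s * q ^ ((s * s.+1)./2%:Z - (s * m)%:Z)
          * qbinom q t (m - s) * qbinom q s (t + l - n)
      = (-1) ^+ m * q ^ (- ((m * m.-1)./2)%:Z - t%:Z * (t%:Z + l%:Z - m%:Z))
          * qbinom q (m + n - t) l.
Proof.
move=> hq hl ht hntl m hmt.
have hn : (0 < n)%N by lia.
have q0 := q_neq0 q n hq hn.
set r := (t + l - n)%N.
case: (ltnP m r) => hmr.
  rewrite (@qb_gt _ q (m + n - t) l) ?mulr0; last by rewrite /r in hmr; lia.
  rewrite big_nat_cond big1 // => s /andP[/andP[_ hs] _].
  by rewrite (@qb_gt _ q s r) ?mulr0 //; lia.
set M := (m - r)%N.
set d := (t - r).-1.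
rewrite big_nat_rev /= add0n.
rewrite (big_cat_nat _ (n := M.+1)) //=; last by rewrite /M; lia.
rewrite [X in _ + X]big_nat_cond [X in _ + X]big1 ?addr0; last first.
  move=> u /andP[/andP[hu1 hu2] _].
  by rewrite (@qb_gt _ q (m.+1 - u.+1) r) ?mulr0 //; rewrite /M in hu1; lia.
set K := (-1) ^+ m * q ^ (M%:Z * r%:Z - ((m * m.-1)./2)%:Z).
transitivity (K * Gs q^-1 (q ^+ (t - r)) 1 r.+1 (r.+1 + d) M).
  rewrite /Gs big_distrr /=; apply: eq_big_nat => u /andP[_ hu].
  rewrite subSS.
  have -> : (m - (m - u) = u)%N by rewrite /M in hu; lia.
  have -> : (r.+1 + d = t)%N by rewrite /d; lia.
  rewrite /Gt expr1n mul1r.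
  have -> : ((r.+1 + (M - u)).-1 = m - u)%N by rewrite /M; lia.
  rewrite (@qb_sym _ q (m - u) r); last by rewrite /M in hu; lia.
  have -> : (m - u - r = M - u)%N by rewrite /M; lia.
  rewrite -(qb_inv q t u q0) -(qb_inv q (m - u) (M - u) q0).
  have -> : (m - u - (M - u) = r)%N by rewrite /M in hu *; lia.
  set A := qbinom q^-1 t u; set B := qbinom q^-1 (m - u) (M - u).
  rewrite -exprM exprVn exprnN ![q ^+ _]exprnP.
  have sg : (-1) ^+ m = (-1) ^+ (m - u) * (-1) ^+ u :> F.
    by rewrite -exprD subnK //; rewrite /M in hu; lia.
  have ss : (-1) ^+ u * (-1) ^+ u = 1 :> F by rewrite -signr_odd -signr_addb addbb.
  rewrite /K sg.
  transitivity ((-1) ^+ (m - u) * (q ^ (((m - u) * (m - u).+1)./2%:Z - Posz ((m - u) * m)%N)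
     * q ^ (Posz (u * (t - u))%N) * q ^ (Posz ((M - u) * r)%N)) * (A * B)); first by ring.
  transitivity ((-1) ^+ (m - u) * ((-1) ^+ u * (-1) ^+ u) * (q ^ (M%:Z * r%:Z - ((m * m.-1)./2)%:Z)
     * q ^ (- ('C(u.+1, 2))%:Z) * q ^ (Posz ((t - r) * u)%N)) * (A * B)); last by ring.
  rewrite ss mulr1; congr (_ * _ * _).
  rewrite -!expfzDr //; congr (q ^ _).
  have [v hv] : exists v, M = (u + v)%N by exists (M - u)%N; lia.
  have [e he] : exists e, t = (m + 1 + e)%N by exists (t - m - 1)%N; lia.
  rewrite /M in hv.
  have hm : m = (r + u + v)%N by lia.
  have -> : (m - u = r + v)%N by lia.
  have -> : (t - u = r + v + 1 + e)%N by lia.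
  have -> : (m - r - u = v)%N by lia.
  have -> : (t - r = u + v + 1 + e)%N by lia.
  rewrite /M hv hm.
  have h1 := half_int (r + v); have h2 := half_int' (r + u + v); have h3 := bin2_int u.
  lia.
have hrt : (r < t)%N by lia.
rewrite G_iter; last first.
  have -> : d.+1 = (t - r)%N by rewrite /d; lia.
  by rewrite exprVn mulVf // expf_neq0.
rewrite (@qb_sym _ q (m + n - t) l); last by rewrite /r in hmr; lia.
have -> : (m + n - t - l = M)%N by rewrite /M /r; lia.
have R := @qb_refl _ q n (t - m - 1) M hq ltac:(rewrite /M; lia).
have e1 : (n.-1 - (t - m - 1) = m + n - t)%N by lia.
have e2 : (t - m - 1 + M = d)%N by rewrite /M /d; lia.
rewrite e1 e2 in R.
have Inv := qb_inv q d M q0.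
set Dp := qbinom q^-1 d M in Inv *.
set Y := qbinom q (m + n - t) M in R *.
set E1 := (M * (t - m - 1) + 'C(M.+1, 2))%N in R.
have EY : Y = (q ^+ E1)^-1 * ((-1) ^+ M * (q ^+ (M * (d - M)) * Dp)).
  by rewrite Inv -R mulKf // expf_neq0.
rewrite EY /K -exprM exprVn !exprnN ![q ^+ _]exprnP.
set s1 := (-1) ^+ m; set s2 := (-1) ^+ M.
transitivity (s1 * s2 * (q ^ (M%:Z * r%:Z - ((m * m.-1)./2)%:Z) * q ^ (- ('C(M.+1, 2))%:Z)
   * q ^ (Posz ((t - r) * M)%N)) * Dp); first by ring.
transitivity (s1 * s2 * (q ^ (- ((m * m.-1)./2)%:Z - t%:Z * (t%:Z + l%:Z - m%:Z)) * q ^ (- E1%:Z)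
   * q ^ (Posz (M * (d - M))%N)) * Dp); last by ring.
congr (_ * _ * _).
rewrite -!expfzDr //.
apply: (qz_mod q n _ _ t%:Z hq hn).
have [v hv] : exists v, t = (m + 1 + v)%N by exists (t - m - 1)%N; lia.
have hm : m = (r + M)%N by rewrite /M; lia.
have hd : d = (M + v)%N by rewrite /d /M; lia.
have hrn : (r + n = t + l)%N by rewrite /r; lia.
rewrite /E1 hd.
have -> : (t - m - 1 = v)%N by lia.
have -> : (M + v - M = v)%N by lia.
have -> : (t - r = M + v + 1)%N by lia.
lia.
Qed.
Theorem lemma2p5 (F : fieldType) (n : nat) (q : F) (k l t : nat) :
  n.-primitive_root q -> (k < n)%N -> (l < n)%N -> (t < n)%N ->
  [/\
   (* (i) *)
   ((n <= t + l)%N ->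
    forall m : nat, (m < t)%N ->
      \sum_(0 <= s < m.+1)
        (-1) ^+ s * q ^ ((s * s.+1)./2%:Z - (s * m)%:Z)
          * qbinom q t (m - s) * qbinom q s (t + l - n)
      = (-1) ^+ m * q ^ (- ((m * m.-1)./2)%:Z - t%:Z * (t%:Z + l%:Z - m%:Z))
          * qbinom q (m + n - t) l),
   (* (ii) *)
   ((l <= k)%N ->
    \sum_(0 <= s < l.+1)
      (-1) ^+ s * q ^ ((s * s.+1)./2%:Z - s%:Z * (l%:Z - k%:Z))
        * qbinom q (n + l - k) s
    = qbinom q k l) &
   (* (iii) *)
   ((l <= k)%N ->
    forall m : nat, (l <= m)%N -> (m < n)%N ->
      \sum_(0 <= s < m.+1)
        (-1) ^+ s * q ^ ((s * s.+1)./2%:Z - s%:Z * (l%:Z - k%:Z))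
          * qbinom q (n + m - k) s * qbinom q (n + m - s) (n + l - s)
      = qbinom q k l)].
Proof.
move=> hq hk hl ht; split.
- exact: part1.
- exact: part2.
- exact: part3.
Qed.
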